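(* For every ${\bf F}(z)\in\hat\Lambda^{(s)}\otimes V$ and every $N\ge2$, $$(\bar\pi_{N-1}\otimes1)\big(\mathcal D{\bf F}\big)(x_1)=\mathcal D^{(N)}_1\,(\bar\pi_{N-1}\otimes1){\bf F}(x_1).$$
   Context: Fix $s\ge1$, $\beta\in{\mathbb C}$. Let $\hat\Lambda^{(s)}={\mathbb C}[p_{a,k}: a=1,\dots,s,\ k\ge0]$, $e_1,\dots,e_s$ the standard basis of ${\mathbb C}^s$, $V={\mathbb C}[z]\otimes{\mathbb C}^s$. For $c=1,\dots,s$: $\Phi_c(z)$ is the substitution $p_{c,k}\mapsto p_{c,k}+z^k$ ($k\ge0$), $\Phi_c^{-1}(z)$ the substitution $p_{c,k}\mapsto p_{c,k}-z^k$ ($k\ge0$), and $\varphi^-_c(z)=\sum_{k\ge0}p_{c,k}z^{-k}$. $\langle0|_+$ is the constant-term functional on $\hat\Lambda^{(s)}$. For ${\bf F}(z)=\sum_cF_c(z)\otimes e_c$ ($F_c\in\hat\Lambda^{(s)}[z]$), $(\bar\pi_{N-1}\otimes1){\bf F}(x_1)=\sum_{c_1,\dots,c_N}\langle0|_+\Phi_{c_N}(x_N)\cdots\Phi_{c_2}(x_2)F_{c_1}(x_1)\,e_{c_1}\otimes\cdots\otimes e_{c_N}$, a $({\mathbb C}^s)^{\otimes N}$-valued polynomial in $x_1,\dots,x_N$ (the $i$-th factor carries $x_i$). The operator $\mathcal D$ on $\hat\Lambda^{(s)}\otimes V$ is defined by $$\mathcal D(F_a(z)\otimes e_a)=\Big(z\frac{d}{dz}F_a(z)+\beta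 z\,\mathrm{Res}_{\xi}\sum_{c=1}^s\frac{1}{\xi^2(1-z/\xi)}\varphi^-_c(\xi)\Phi_c^{-1}(\xi)\Phi_c(z)F_a(\xi)\Big)\otimes e_a,$$ where $\frac{1}{1-z/\xi}=\sum_{m\ge0}z^m\xi^{-m}$ and $\mathrm{Res}_\xi$ takes the coefficient of $\xi^{-1}$. The Heckman–Dunkl operator acting on $({\mathbb C}^s)^{\otimes N}$-valued polynomials in $x_1,\dots,x_N$ is $\mathcal D^{(N)}_1=x_1\frac{\partial}{\partial x_1}+\beta\sum_{j\ne1}\frac{x_1}{x_1-x_j}(1-K_{1j})$, where $K_{1j}$ swaps the variables $x_1,x_j$ (not the tensor factors). *)

(* Defs.v *)
From HB Require Import structures.
From mathcomp Require Import all_boot all_order all_algebra.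
Set Implicit Arguments. Unset Strict Implicit. Unset Printing Implicit Defensive.
Import Order.TTheory GRing.Theory Num.Theory.
Local Open Scope ring_scope.

(*   VP a k  = p_{a+1,k}   (generators of \hat\Lambda^{(s)}, colour a 0-based) *)
(*   VZ      = z           (the variable of V = C[z] (x) C^s)                *)
(*   VXi     = xi          (the residue variable)                            *)
(*   VX i    = x_{i+1}     (the variables x_1,...,x_N, 0-based)              *)
Inductive var := VP of nat & nat | VZ | VXi | VX of nat.

Definition var_eq_dec : comparable var.
Proof. move=> u v; rewrite /decidable; decide equality; exact: (fun m n : nat => decP (m =P n)). Defined.

HB.instance Definition _ := hasDecEq.Build var (compareP var_eq_dec).

(* Polynomials in the variables [var] with coefficients in C, written as a   *)
(* formal sum of terms  c * v_1 * ... * v_r  (list of (c, [v_1;...;v_r])).   *)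
(* Two such expressions denote the same polynomial iff they have the same    *)
(* evaluation [meval] everywhere (C infinite).  All operations below are     *)
(* compatible with this identification.                                      *)
Section MPoly.
Context {C : comNzRingType}.

Definition mpoly := seq (C * seq var).

Definition meval (e : var -> C) (p : mpoly) : C :=
  \sum_(t <- p) t.1 * \prod_(v <- t.2) e v.

Definition mzero : mpoly := [::].
Definition mconst (c : C) : mpoly := [:: (c, [::])].
Definition mvar (v : var) : mpoly := [:: (1, [:: v])].
Definition madd (p q : mpoly) : mpoly := p ++ q.
Definition mscale (c : C) (p : mpoly) : mpoly := [seq (c * t.1, t.2) | t <- p].
Definition msub (p q : mpoly) : mpoly := madd p (mscale (-1) q).
Definition mmul (p q : mpoly) : mpoly :=
  [seq (t.1 * u.1, t.2 ++ u.2) | t <- p, u <- q].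
Definition mpow (p : mpoly) (n : nat) : mpoly := iter n (mmul p) (mconst 1).
Definition msum (ps : seq mpoly) : mpoly := flatten ps.

Definition msubst (f : var -> mpoly) (p : mpoly) : mpoly :=
  flatten [seq mscale t.1 (foldr mmul (mconst 1) (map f t.2)) | t <- p].

Definition mderiv (v : var) (p : mpoly) : mpoly :=
  [seq (t.1 *+ count_mem v t.2, rem v t.2) | t <- p].

Definition mcoef (v : var) (j : nat) (p : mpoly) : mpoly :=
  [seq (t.1, filter (predC1 v) t.2) | t <- p & count_mem v t.2 == j].

(* an upper bound for the degree in v *)
Definition mdeg (v : var) (p : mpoly) : nat := \max_(t <- p) count_mem v t.2.

Definition Phi (c : nat) (w : mpoly) : mpoly -> mpoly :=
  msubst (fun v => match v with
                   | VP a k => if a == c then madd (mvar v) (mpow w k) else mvar v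
                   | _ => mvar v end).

Definition Phi_inv (c : nat) (w : mpoly) : mpoly -> mpoly :=
  msubst (fun v => match v with
                   | VP a k => if a == c then msub (mvar v) (mpow w k) else mvar v
                   | _ => mvar v end).

Definition zsubst (w : mpoly) : mpoly -> mpoly :=
  msubst (fun v => if v == VZ then w else mvar v).

Definition vacuum : mpoly -> mpoly :=
  msubst (fun v => if v is VP _ _ then mzero else mvar v).

(* Formal series in xi^{-1}: S n is the coefficient of xi^{-n}. *)
Definition series := nat -> mpoly.

Definition smul (S T : series) : series :=
  fun n => msum [seq mmul (S i) (T (n - i)%N) | i <- iota 0 n.+1].

(* 1 / (xi^2 (1 - z/xi)) = sum_{m>=0} z^m xi^{-m-2} *)
Definition kernel_series : series :=
  fun n => if (2 <= n)%N then mpow (mvar VZ) (n - 2) else mzero.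

(* phi^-_c(xi) = sum_{k>=0} p_{c,k} xi^{-k} *)
Definition phim_series (c : nat) : series := fun n => mvar (VP c n).

(* Res_xi ( S(xi) * G(xi) ) for a series S in xi^{-1} and a polynomial G in xi:
   the coefficient of xi^{-1}, i.e. sum_j S_{j+1} * [xi^j] G. *)
Definition Res_xi (S : series) (G : mpoly) : mpoly :=
  msum [seq mmul (S j.+1) (mcoef VXi j G) | j <- iota 0 (mdeg VXi G).+1].

(* An element F(z) = sum_a F_a(z) (x) e_a of \hat\Lambda^{(s)} (x) V is a family
   F : 'I_s -> mpoly whose members only involve the p_{a,k} (a < s) and z. *)
Definition in_LambdaZ (s : nat) (p : mpoly) : bool :=
  all (fun t => all (fun v => match v with
                              | VP a _ => (a < s)%N
                              | VZ => true
                              | _ => false end) t.2) p.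

Definition calD (s : nat) (beta : C) (F : 'I_s -> mpoly) : 'I_s -> mpoly :=
  fun a =>
    madd (mmul (mvar VZ) (mderiv VZ (F a)))
         (mscale beta (mmul (mvar VZ)
            (msum [seq Res_xi (smul kernel_series (phim_series c))
                        (Phi_inv c (mvar VXi) (Phi c (mvar VZ) (zsubst (mvar VXi) (F a))))
                   | c <- map val (enum 'I_s)]))).

(* (\bar\pi_{N-1} (x) 1) F, component along e_{c_1} (x) ... (x) e_{c_N}, where
   cs = [:: c_1; ...; c_N]:
   <0|_+ Phi_{c_N}(x_N) ... Phi_{c_2}(x_2) F_{c_1}(x_1). *)
Definition pibar (s : nat) (F : 'I_s -> mpoly) (cs : seq 'I_s) : mpoly :=
  match cs with
  | [::] => mzero
  | c1 :: rest =>
      vacuum (foldl (fun G ic => Phi (val ic.2) (mvar (VX ic.1)) G)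
                    (zsubst (mvar (VX 0)) (F c1))
                    (zip (iota 1 (size rest)) rest))
  end.

End MPoly.

Definition xenv {C : comNzRingType} (x : nat -> C) : var -> C :=
  fun v => if v is VX i then x i else 0.

(* x with x_1 and x_{j+1} swapped (the action of K_{1,j+1} on the variables) *)
Definition xswap {C : Type} (x : nat -> C) (j : nat) : nat -> C :=
  fun i => if i == 0%N then x j else if i == j then x 0%N else x i.

(* Value at the point x (with x_1 <> x_j for j <> 1) of
   D^{(N)}_1 f = x_1 d/dx_1 f + beta sum_{j<>1} x_1/(x_1 - x_j) (1 - K_{1j}) f,
   for a scalar polynomial f(x_1,...,x_N) (D^{(N)}_1 acts componentwise on
   (C^s)^{(x)N}-valued polynomials since K_{1j} does not permute tensor factors). *)
Definition HD1_at {C : fieldType} (beta : C) (N : nat) (f : @mpoly C)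
    (x : nat -> C) : C :=
  meval (xenv x) (mmul (mvar (VX 0)) (mderiv (VX 0) f))
  + beta * \sum_(1 <= j < N)
      x 0%N / (x 0%N - x j) * (meval (xenv x) f - meval (xenv (xswap x j)) f).

(* Main.v *)
Require Import Defs.
From HB Require Import structures.
From mathcomp Require Import all_boot all_order all_algebra.
From mathcomp Require Import ring.
Import Order.TTheory GRing.Theory Num.Theory.
Local Open Scope ring_scope.
Set Implicit Arguments. Unset Strict Implicit. Unset Printing Implicit Defensive.

Section Eval.
Variables (C R : comNzRingType) (f : {rmorphism C -> R}).

Definition mevalR (e : var -> R) (p : @mpoly C) : R :=
  \sum_(t <- p) f t.1 * \prod_(v <- t.2) e v.

Lemma eq_mevalR e1 e2 p : (forall v, e1 v = e2 v) -> mevalR e1 p = mevalR e2 p.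
Proof. move=> H; apply: eq_bigr => t _; congr (_ * _); apply: eq_bigr => v _; exact: H. Qed.

Lemma mevalR_add e p q : mevalR e (madd p q) = mevalR e p + mevalR e q.
Proof. by rewrite /mevalR /madd big_cat. Qed.

Lemma mevalR_const e c : mevalR e (mconst c) = f c.
Proof. by rewrite /mevalR /mconst big_seq1 big_nil mulr1. Qed.

Lemma mevalR_zero e : mevalR e mzero = 0.
Proof. by rewrite /mevalR big_nil. Qed.

Lemma mevalR_var e v : mevalR e (mvar v) = e v.
Proof. by rewrite /mevalR big_seq1 big_seq1 rmorph1 mul1r. Qed.

Lemma mevalR_scale e c p : mevalR e (mscale c p) = f c * mevalR e p.
Proof.
rewrite /mevalR /mscale big_map mulr_sumr; apply: eq_bigr => t _ /=.
by rewrite rmorphM mulrA.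
Qed.

Lemma mevalR_sub e p q : mevalR e (msub p q) = mevalR e p - mevalR e q.
Proof. by rewrite /msub mevalR_add mevalR_scale rmorphN1 mulN1r. Qed.

Lemma mevalR_mul e p q : mevalR e (mmul p q) = mevalR e p * mevalR e q.
Proof.
rewrite /mevalR /mmul.
have -> : [seq (t.1 * u.1, t.2 ++ u.2) | t <- p, u <- q] =
   map (fun tu : (C * seq var) * (C * seq var) => (tu.1.1 * tu.2.1, tu.1.2 ++ tu.2.2))
       [seq (t, u) | t <- p, u <- q].
  by rewrite map_allpairs.
rewrite big_map big_allpairs mulr_suml; apply: eq_bigr => t _.
rewrite mulr_sumr; apply: eq_bigr => u _ /=.
by rewrite rmorphM big_cat /= mulrACA.
Qed.

Lemma mevalR_pow e p n : mevalR e (mpow p n) = mevalR e p ^+ n.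
Proof.
elim: n => [|n IH]; first by rewrite /mpow /= mevalR_const rmorph1.
by rewrite /mpow iterS -/(mpow p n) mevalR_mul IH exprS.
Qed.

Lemma mevalR_sum e ps : mevalR e (msum ps) = \sum_(p <- ps) mevalR e p.
Proof.
elim: ps => [|p ps IH]; first by rewrite /msum /= mevalR_zero big_nil.
by rewrite /msum /= -/(msum ps) big_cons -IH -mevalR_add.
Qed.

Lemma mevalR_foldr e l : mevalR e (foldr mmul (mconst 1) l) = \prod_(p <- l) mevalR e p.
Proof.
elim: l => [|p l IH]; first by rewrite /= mevalR_const rmorph1 big_nil.
by rewrite /= mevalR_mul IH big_cons.
Qed.

Lemma mevalR_subst e g p :
  mevalR e (msubst g p) = mevalR (fun v => mevalR e (g v)) p.
Proof.
elim: p => [|t p IH]; first by rewrite /msubst /= mevalR_zero /mevalR big_nil.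
rewrite /msubst /= -/(msubst g p) -/(madd _ _) mevalR_add IH.
rewrite mevalR_scale mevalR_foldr big_map.
by rewrite /mevalR big_cons.
Qed.

Lemma eq_mevalR_in s e1 e2 p : in_LambdaZ s p ->
  (forall b k, (b < s)%N -> e1 (VP b k) = e2 (VP b k)) -> e1 VZ = e2 VZ ->
  mevalR e1 p = mevalR e2 p.
Proof.
move=> Hp HP HZ; rewrite /mevalR big_seq [RHS]big_seq; apply: eq_bigr => t Ht.
congr (_ * _); rewrite big_seq [RHS]big_seq; apply: eq_bigr => v Hv.
move/allP: Hp => /(_ t Ht) /allP /(_ v Hv).
by case: v Hv => // b k _ /HP.
Qed.

End Eval.

Lemma meval_R (C : comNzRingType) (e : var -> C) p : meval e p = mevalR idfun e p.
Proof. by []. Qed.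

Section Poly.
Variable C : comNzRingType.

Lemma prod_coefX (e : var -> C) w l :
  \prod_(v <- l) (if v == w then 'X else (e v)%:P) =
  (\prod_(v <- filter (predC1 w) l) e v)%:P * 'X^(count_mem w l).
Proof.
elim: l => [|v l IH]; first by rewrite !big_nil mul1r.
rewrite big_cons IH /=; case: eqP => [->|/eqP Hne].
  by rewrite /= add1n exprS mulrCA.
by rewrite /= add0n big_cons polyCM mulrA.
Qed.

Lemma coef_mcoef (e : var -> C) w j p :
  (mevalR polyC (fun v => if v == w then 'X else (e v)%:P) p)`_j = meval e (mcoef w j p).
Proof.
rewrite /mevalR coef_sum /mcoef /meval big_map big_filter [RHS]big_mkcond /=.
apply: eq_bigr => t _; rewrite prod_coefX mulrA -polyCM coefCM coefXn.
by rewrite eq_sym; case: eqP => _; rewrite ?mulr1 ?mulr0.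
Qed.

Lemma mcoef_nil w j (p : @mpoly C) : (mdeg w p < j)%N -> mcoef w j p = [::].
Proof.
move=> Hj; rewrite /mcoef.
have -> : [seq t <- p | count_mem w t.2 == j] = [::] => //.
apply/eqP; rewrite -[_ == _]negbK -has_filter; apply/hasPn => t Ht /=.
apply/eqP => Heq; move: Hj; rewrite -Heq ltnNge => /negP; apply.
rewrite /mdeg; exact: (leq_bigmax_seq _ Ht).
Qed.

Lemma prod_coefD (e : var -> C) w l :
  (\prod_(v <- l) (if v == w then (e v)%:P + 'X else (e v)%:P))`_0 = \prod_(v <- l) e v /\
  (\prod_(v <- l) (if v == w then (e v)%:P + 'X else (e v)%:P))`_1 = (count_mem w l)%:R * \prod_(v <- rem w l) e v.
Proof.
elim: l => [|v l IH]; first by rewrite !big_nil !coefC /= mul0r.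
case: IH => I0 I1; rewrite !big_cons.
case: eqP => [->|/eqP Hne].
  split; first by rewrite coef0M coefD coefC coefX /= addr0 I0.
  rewrite mulrDl coefD coefCM (mulrC 'X) coefMX /= I0 I1 eqxx add1n mulrS.
  have [Hin|Hnin] := boolP (w \in l).
    by rewrite (perm_big _ (perm_to_rem Hin)) big_cons mulrDl mul1r addrC mulrCA.
  by rewrite (count_memPn Hnin) rem_id // !mulr0n mul0r mulr0 add0r addr0 mul1r.
split; first by rewrite coef0M coefC /= I0.
rewrite coefCM I1 /= (negbTE Hne) add0n big_cons.
by rewrite mulrCA.
Qed.

Lemma coef_mderiv (e : var -> C) w p :
  (mevalR polyC (fun v => if v == w then (e v)%:P + 'X else (e v)%:P) p)`_1 =
  meval e (mderiv w p).
Proof.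
rewrite /mevalR coef_sum /mderiv /meval big_map; apply: eq_bigr => t _ /=.
rewrite coefCM; case: (prod_coefD e w t.2) => _ ->.
by rewrite mulrA mulr_natr.
Qed.

Lemma horner_mevalR (E : var -> {poly C}) p a :
  (mevalR polyC E p).[a] = meval (fun v => (E v).[a]) p.
Proof.
rewrite /mevalR horner_sum /meval; apply: eq_bigr => t _.
by rewrite hornerM hornerC horner_prod.
Qed.

End Poly.

Section Pib.
Variables (C R : comNzRingType) (f : {rmorphism C -> R}).

Definition envL s (e : var -> R) (L : seq (nat * 'I_s)) : var -> R :=
  fun v => match v with
           | VP b k => \sum_(ic <- L) (b == val ic.2)%:R * e (VX ic.1) ^+ k
           | _ => e v end.

Lemma chain_eval s (e : var -> R) (L : seq (nat * 'I_s)) (Q : @mpoly C) :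
  mevalR f e (vacuum (foldl (fun G (ic : nat * 'I_s) => Phi (val ic.2) (mvar (VX ic.1)) G) Q L))
  = mevalR f (envL e L) Q.
Proof.
elim: L Q => [|ic L IH] Q /=.
  rewrite /vacuum mevalR_subst; apply: eq_mevalR => -[b k| | |i] /=;
    by rewrite ?mevalR_zero ?mevalR_var ?big_nil.
rewrite IH /Phi mevalR_subst; apply: eq_mevalR => -[b k| | |i] /=;
  rewrite ?mevalR_var //.
rewrite big_cons; case: eqP => [->|_].
  rewrite -[_ :: mpow _ _]/(madd (mvar (VP ic.2 k)) (mpow (mvar (VX ic.1)) k)).
  by rewrite mevalR_add mevalR_pow !mevalR_var /= mul1r addrC.
by rewrite mevalR_var /= mul0r add0r.
Qed.

Lemma big_zip_iota (T : Type) (h : nat * T -> R) (x0 : T) (l : seq T) m :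
  \sum_(ic <- zip (iota m (size l)) l) h ic = \sum_(i < size l) h (m + i, nth x0 l i)%N.
Proof.
elim: l m => [|a l IH] m /=; first by rewrite big_nil big_ord0.
by rewrite big_cons big_ord_recl IH addn0; congr (_ + _); apply: eq_bigr => i _; rewrite addSnnS.
Qed.

Definition penv s (e : var -> R) (c1 : 'I_s) (rest : seq 'I_s) : var -> R :=
  fun v => match v with
           | VP b k => \sum_(i < size rest) (b == val (nth c1 rest i))%:R * e (VX i.+1) ^+ k
           | VZ => e (VX 0)
           | _ => e v end.

Lemma pibar_eval s (G : 'I_s -> @mpoly C) (e : var -> R) c1 rest :
  mevalR f e (pibar G (c1 :: rest)) = mevalR f (penv e c1 rest) (G c1).
Proof.
rewrite /pibar chain_eval /zsubst mevalR_subst; apply: eq_mevalR => -[b k| | |i] /=;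
  rewrite ?mevalR_var //=.
by rewrite (big_zip_iota (fun ic : nat * 'I_s => (b == val ic.2)%:R * e (VX ic.1) ^+ k) c1).
Qed.

Lemma H_eval s (p : @mpoly C) (c : nat) (e e' : var -> R) :
  in_LambdaZ s p -> e' VZ = e VXi ->
  (forall b k, (b < s)%N -> e' (VP b k) = e (VP b k) + (b == c)%:R * (e VZ ^+ k - e VXi ^+ k)) ->
  mevalR f e (Phi_inv c (mvar VXi) (Phi c (mvar VZ) (zsubst (mvar VXi) p))) = mevalR f e' p.
Proof.
move=> Hp HZ HP.
rewrite /Phi_inv /Phi /zsubst !mevalR_subst.
apply: (@eq_mevalR_in _ _ f s _ _ p Hp) => [b k Hb|] /=; last by rewrite !mevalR_var /= HZ.
rewrite HP // mevalR_var /=.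
case: eqP => [->|/eqP Hne]; last by rewrite mevalR_var /= (negbTE Hne) mevalR_var mul0r addr0.
rewrite -[_ :: mpow _ _]/(madd (mvar (VP c k)) (mpow (mvar VZ) k)) mevalR_add mevalR_pow !mevalR_var.
cbv beta iota; rewrite eqxx mevalR_sub mevalR_pow !mevalR_var mul1r; ring.
Qed.

End Pib.

Definition Kq (C : comNzRingType) (j : nat) (a b : C) : C :=
  \sum_(i <- iota 0 j.+2) (if (2 <= i)%N then a ^+ (i - 2) else 0) * b ^+ (j.+1 - i).

Lemma Kq_eq (C : comNzRingType) j (a b : C) : (a - b) * Kq j a b = a ^+ j - b ^+ j.
Proof.
rewrite /Kq; elim: j => [|j IH].
  by rewrite /= !big_cons big_nil /= !mul0r !addr0 mulr0 !expr0 subrr.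
have E : forall m, iota 0 m = index_iota 0 m by move=> m; rewrite /index_iota subn0.
rewrite E in IH; rewrite E big_nat_recr //= subnn expr0 mulr1.
have HH : \sum_(0 <= i < j.+2) (if (2 <= i)%N then a ^+ (i - 2) else 0) * b ^+ (j.+2 - i)
   = b * \sum_(0 <= i < j.+2) (if (2 <= i)%N then a ^+ (i - 2) else 0) * b ^+ (j.+1 - i).
  rewrite mulr_sumr big_nat; rewrite [RHS]big_nat; apply: eq_bigr => i /andP [_ Hi].
  by rewrite subSn // exprS mulrCA.
rewrite HH !subSS subn0 mulrDr mulrCA IH.
by rewrite !exprS; ring.
Qed.

Lemma VX_eq i j : (VX i == VX j) = (i == j).
Proof. by apply/eqP/eqP => [[]|->]. Qed.

Lemma Kq_horner (K : fieldType) (a b : K) (h : {poly K}) D : a != b -> (size h <= D.+1)%N ->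
  \sum_(j <- iota 0 D.+1) Kq j a b * h`_j = (h.[a] - h.[b]) / (a - b).
Proof.
move=> Hab Hs; have Hn : a - b != 0 by rewrite subr_eq0.
apply: (mulIf Hn); rewrite divfK // mulr_suml.
have -> : iota 0 D.+1 = index_iota 0 D.+1 by rewrite /index_iota subn0.
rewrite big_mkord !(horner_coef_wide _ Hs) -sumrB; apply: eq_bigr => j _.
by rewrite mulrAC (mulrC (Kq _ _ _)) Kq_eq mulrBl !(mulrC h`_j).
Qed.

Unset Implicit Arguments.
Theorem proposition3p1 (C : numClosedFieldType) (s : nat) (beta : C)
    (F : 'I_s -> @mpoly C) :
  (0 < s)%N ->
  (forall a, in_LambdaZ s (F a)) ->
  forall N : nat, (2 <= N)%N ->
  forall (c : N.-tuple 'I_s) (x : nat -> C),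
    (forall j, (0 < j < N)%N -> x 0%N != x j) ->
    meval (xenv x) (pibar (calD beta F) c) = HD1_at beta N (pibar F c) x.
Proof.
move=> _ HF N HN [cs Hcs] x Hx.
case: cs Hcs => [|c1 rest] Hcs; first by rewrite -(eqP Hcs) in HN.
have HN' : N = (size rest).+1 by rewrite -(eqP Hcs).
subst N.
rewrite /HD1_at !meval_R !pibar_eval.
set n := size rest.
set E := penv (xenv x) c1 rest.
have Hder : mevalR idfun (xenv x) (mmul (mvar (VX 0)) (mderiv (VX 0) (pibar F (Tuple Hcs))))
   = x 0%N * mevalR idfun E (mderiv VZ (F c1)).
  rewrite mevalR_mul mevalR_var /=; congr (_ * _).
  rewrite -!meval_R -!coef_mderiv pibar_eval; apply: (congr1 (fun q : {poly C} => q`_1)).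
  apply: (@eq_mevalR_in _ _ _ s _ _ _ (HF c1)) => [b k Hb|] /=; last by [].
  rewrite (raddf_sum polyC); apply: eq_bigr => i _.
  by rewrite -(rmorphXn polyC) -(rmorph_nat polyC) -(rmorphM polyC).
have HEZ : E VZ = x 0%N by [].
have Hres : forall c : 'I_s,
  mevalR idfun E (Res_xi (smul kernel_series (phim_series (val c)))
     (Phi_inv (val c) (mvar VXi) (Phi (val c) (mvar VZ) (zsubst (mvar VXi) (F c1)))))
  = \sum_(l < n) (val c == val (nth c1 rest l))%:R *
      ((mevalR idfun E (F c1) - mevalR idfun (penv (xenv (xswap x l.+1)) c1 rest) (F c1))
        / (x 0%N - x l.+1)).
  move=> c.
  set G := Phi_inv _ _ _.
  set hp := mevalR polyC (fun v => if v == VXi then 'X else (E v)%:P) G.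
  have Hsz : (size hp <= (mdeg VXi G).+1)%N.
    apply/leq_sizeP => j Hj; rewrite /hp coef_mcoef mcoef_nil //.
    by rewrite /meval big_nil.
  have Hcoef : forall j, mevalR idfun E (mcoef VXi j G) = hp`_j.
    by move=> j; rewrite /hp coef_mcoef.
  have HS : forall j, mevalR idfun E (smul kernel_series (phim_series (val c)) j.+1)
     = \sum_(l < n) (val c == val (nth c1 rest l))%:R * Kq j (x 0%N) (x l.+1).
    move=> j; rewrite /smul mevalR_sum big_map.
    under eq_bigr => i _ do rewrite mevalR_mul /phim_series mevalR_var /E /= mulr_sumr.
    rewrite exchange_big; apply: eq_bigr => l _; rewrite /Kq mulr_sumr; apply: eq_bigr => i _.
    rewrite /kernel_series; case: ifP => _; rewrite ?mevalR_pow ?mevalR_var ?mevalR_zero /=.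
      by rewrite mulrCA.
    by rewrite !mul0r mulr0.
  have H1 : hp.[x 0%N] = mevalR idfun E (F c1).
    rewrite /hp horner_mevalR meval_R /G.
    apply: (@H_eval _ _ idfun s (F c1) (val c) _ E (HF c1)) => /= [|b k Hb].
      by rewrite hornerX.
    by rewrite !hornerC hornerX subrr mulr0 addr0.
  rewrite /Res_xi mevalR_sum big_map.
  under eq_bigr => j _ do rewrite mevalR_mul HS Hcoef mulr_suml.
  rewrite exchange_big; apply: eq_bigr => l _.
  under eq_bigr => j _ do rewrite -mulrA.
  rewrite -mulr_sumr.
  case: eqP => Hcl; last by rewrite !mul0r.
  congr (_ * _).
  have Hxl : x 0%N != x l.+1 by apply: Hx; rewrite /= ltnS ltn_ord.
  rewrite (Kq_horner Hxl Hsz) H1; congr ((_ - _) / _).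
  rewrite /hp horner_mevalR meval_R /G.
  apply: (@H_eval _ _ idfun s (F c1) (val c) _ _ (HF c1)) => /= [|b k Hb].
    by rewrite hornerX /xswap /=.
  rewrite !hornerC hornerX Hcl.
  rewrite (bigD1 l) //= [in RHS](bigD1 l) //= {1}/xswap /= eqxx.
  rewrite (eq_bigr (fun i : 'I_n => (b == nth c1 rest i)%:R * x i.+1 ^+ k)); first by ring.
  move=> i Hi; congr (_ * _ ^+ _); rewrite /=.
  have Hil : (val i == val l) = false by exact: negbTE Hi.
  by rewrite /xswap /= eqSS Hil.
have Hone : forall d : 'I_s, \sum_(c <- enum 'I_s) ((val c == val d)%:R : C) = 1.
  move=> d; rewrite (bigD1_seq d) ?mem_enum ?enum_uniq //= eqxx big1 ?addr0 // => c Hc.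
  by have -> : (val c == val d) = false by exact: negbTE Hc.
rewrite /calD mevalR_add mevalR_mul mevalR_var mevalR_scale mevalR_mul mevalR_var mevalR_sum.
rewrite big_map big_map HEZ Hder.
under eq_bigr => c _ do rewrite Hres.
rewrite exchange_big /=.
under eq_bigr => l _ do rewrite -mulr_suml Hone mul1r.
rewrite big_add1 succnK big_mkord [x 0%N * \sum_(l < n) _]mulr_sumr.
congr (_ + beta * _); apply: eq_bigr => l _.
rewrite meval_R pibar_eval.
by rewrite mulrA mulrAC.
Qed.
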